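(* Let $\nu,\eta\geq1$ and let $(\phi_n)_{n\in\mathbb N}$ be real polynomials with $\phi_n$ of degree $n$ whose linearization coefficients $\alpha^{m,n}_k$ (defined by $\phi_m\phi_n=\sum_{k=0}^{m+n}\alpha^{m,n}_k\phi_k$) satisfy $\sum_{k=0}^{m+n}\vert\alpha^{m,n}_k\vert=1$ for all $m,n\in\mathbb N$, and let $\ast$ be the associated generalized convolution product on $\ell^1_\eta(\mathbb N,\mathbb C)$. Let $B$ be a linear operator on $\ell^1_\nu(\mathbb Z,\ell^1_\eta(\mathbb N,\mathbb C))$ represented as an infinite matrix $(B_{k,l})_{k,l\in\mathbb Z}$ of linear operators on $\ell^1_\eta(\mathbb N,\mathbb C)$ (i.e. $(Bu)_k=\sum_{l\in\mathbb Z}B_{k,l}u_l$), and assume each $B_{k,l}$ is the multiplication operator $v\mapsto b_{k,l}\ast v$ by some $b_{k,l}\in\ell^1_\eta(\mathbb N,\mathbb C)$. Then $$\Vert B\Vert_{\ell^1_\nu(\mathbb Z,\ell^1_\eta)}=\sup_{l\in\mathbb Z}\frac{1}{\nu^{\vert l\vert}}\sum_{k\in\mathbb Z}\Vert b_{k,l}\Vert_{\ell^1_\eta}\nu^{\vert k\vert},$$ i.e. the operator norm of $B$ equals the $\ell^1_\nu$ operator norm of the infinite real matrix $(\Vert b_{k,l}\Vert_{\ell^1_\eta})_{k,l\in\mathbb Z}$.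
   Context: $\ell^1_\eta(\mathbb N,\mathbb C)$ is the space of complex sequences $x=(x_n)_{n\in\mathbb N}$ with $\Vert x\Vert_{\ell^1_\eta}=\sum_n\vert x_n\vert\eta^n<\infty$. The generalized convolution product is $(x\ast y)_k=\sum_{m,n\in\mathbb N}x_my_n\alpha^{m,n}_k$. For a normed space $(X,\Vert\cdot\Vert)$, $\ell^1_\nu(\mathbb Z,X)$ is the space of sequences $u=(u_k)_{k\in\mathbb Z}$ in $X$ with $\Vert u\Vert_{\ell^1_\nu(\mathbb Z,X)}=\sum_{k\in\mathbb Z}\Vert u_k\Vert\nu^{\vert k\vert}<\infty$. $\Vert B\Vert_{\ell^1_\nu(\mathbb Z,\ell^1_\eta)}$ is the operator norm of $B$ on $\ell^1_\nu(\mathbb Z,\ell^1_\eta(\mathbb N,\mathbb C))$. *)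

(* Defs.v *)
From HB Require Import structures.
From mathcomp Require Import all_boot all_order all_algebra.
From mathcomp Require Import all_classical all_reals all_analysis.
From mathcomp Require Import complex.

Set Implicit Arguments.
Unset Strict Implicit.
Unset Printing Implicit Defensive.
Import Order.TTheory GRing.Theory Num.Theory.

Local Open Scope classical_set_scope.
Local Open Scope ring_scope.

Section Defs.
Variable R : realType.

Definition cmod (z : R[i]) : R := Num.sqrt (complex.Re z ^+ 2 + complex.Im z ^+ 2).

Definition rsum (T : choiceType) (A : set T) (f : T -> R) : R :=
  fine (\esum_(x in A) (Num.max (f x) 0)%:E)
  - fine (\esum_(x in A) (Num.max (- f x) 0)%:E).

Definition csummable (T : choiceType) (A : set T) (f : T -> R[i]) : Prop :=
  summable A (fun x => (cmod (f x))%:E).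

Definition csum (T : choiceType) (A : set T) (f : T -> R[i]) : R[i] :=
  Complex (rsum A (fun x => complex.Re (f x))) (rsum A (fun x => complex.Im (f x))).

(* norm of ell^1_eta(N, C), valued in \bar R (+oo iff not in the space) *)
Definition l1eta_norm (eta : R) (v : nat -> R[i]) : \bar R :=
  \esum_(n in [set: nat]) (cmod (v n) * eta ^+ n)%:E.

Definition l1nu_norm (nu eta : R) (u : int -> nat -> R[i]) : \bar R :=
  \esum_(k in [set: int]) (l1eta_norm eta (u k) * (nu ^+ `|k|%N)%:E)%E.

Definition lincoef (alpha : nat -> nat -> nat -> R) (m n k : nat) : R :=
  if (k <= m + n)%N then alpha m n k else 0.

Definition gconv (alpha : nat -> nat -> nat -> R) (x y : nat -> R[i]) : nat -> R[i] :=
  fun k => csum [set: nat * nat]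
    (fun p => x p.1 * y p.2 * (Complex (lincoef alpha p.1 p.2 k) 0)).

Definition opnorm (nu eta : R)
  (B : (int -> nat -> R[i]) -> (int -> nat -> R[i])) : \bar R :=
  ereal_sup [set l1nu_norm nu eta (B u) | u in [set u | (l1nu_norm nu eta u <= 1)%E]].

End Defs.

(* Main.v *)
Require Import Defs.
From HB Require Import structures.
From mathcomp Require Import all_boot all_order all_algebra.
From mathcomp Require Import all_classical all_reals all_analysis.
From mathcomp Require Import complex.
From mathcomp Require Import ring lra.
Import Order.TTheory GRing.Theory Num.Theory.
Local Open Scope classical_set_scope.
Local Open Scope ring_scope.



Section H.
Variable R : realType.
Local Open Scope ereal_scope.

Lemma fsumZ_aux (T : choiceType) (I X : set T) (c : R) (a : T -> \bar R) :
  (forall i, I i -> 0 <= a i) -> fsets I X ->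
  c%:E * (\sum_(i \in X) a i)%R = (\sum_(i \in X) (c%:E * a i)%E)%R.
Proof.
move=> a0 [finX XI]; rewrite !fsbig_finite// big_seq [RHS]big_seq.
apply: ge0_sume_distrr => i; rewrite in_fset_set// inE => /XI; exact: a0.
Qed.

Lemma esumZ (T : choiceType) (I : set T) (c : R) (a : T -> \bar R) :
  (0 <= c)%R -> (forall i, I i -> 0 <= a i) ->
  \esum_(i in I) (c%:E * a i) = c%:E * \esum_(i in I) a i.
Proof.
move=> c0 a0; rewrite /esum -ereal_supZl//; last first.
  by apply/set0P; exists 0; exists set0; [exact: fsets_set0|rewrite fsbig_set0].
congr ereal_sup; apply/seteqP; split=> x /=.
  move=> [X XI <-]; exists (\sum_(i \in X) a i)%R; first by exists X.
  exact: fsumZ_aux XI.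
move=> [y [X XI <-] <-]; exists X => //; symmetry; exact: fsumZ_aux XI.
Qed.

Lemma esum_single (T : choiceType) (x0 : T) (a : T -> \bar R) :
  (forall y, y != x0 -> a y = 0) -> 0 <= a x0 ->
  \esum_(i in [set: T]) a i = a x0.
Proof.
move=> az a0; rewrite -(esum_set1 (a:=a))//.
rewrite [RHS]esum_mkcond; apply: eq_esum => i _.
case: ifPn => // H; apply: az; apply: contra H => /eqP ->; by rewrite in_setE.
Qed.

Lemma esum_ge_single (T : choiceType) (x0 : T) (a : T -> \bar R) :
  (forall y, 0 <= a y) -> a x0 <= \esum_(i in [set: T]) a i.
Proof.
move=> a0; rewrite -(esum_set1 (a:=a))// esum_mkcond; apply: le_esum => i _.
by case: ifPn.
Qed.

Lemma esum_swap (T1 T2 : choiceType) (a : T1 -> T2 -> \bar R) :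
  (forall i j, 0 <= a i j) ->
  \esum_(i in [set: T1]) \esum_(j in [set: T2]) a i j =
  \esum_(j in [set: T2]) \esum_(i in [set: T1]) a i j.
Proof.
move=> a0; rewrite !esum_esum//.
rewrite (reindex_esum ([set: T2] `*`` (fun=> [set: T1])) _ (fun x => (x.2, x.1)))//.
split=> //=.
- by move=> [i1 i2] [j1 j2] /= _ _ [] -> ->.
- by move=> [i1 i2] _ /=; exists (i2, i1).
Qed.

Lemma esum_pair (T1 T2 : choiceType) (a : T1 -> T2 -> \bar R) :
  (forall i j, 0 <= a i j) ->
  \esum_(p in [set: T1 * T2]) a p.1 p.2 =
  \esum_(i in [set: T1]) \esum_(j in [set: T2]) a i j.
Proof.
move=> a0; rewrite esum_esum//; congr esum.
by apply/seteqP; split=> -[i j].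
Qed.

End H.

Section C.
Variable R : realType.

Lemma cmod_ge0 (z : R[i]) : 0 <= cmod z.
Proof. exact: sqrtr_ge0. Qed.

Lemma cmodM (x y : R[i]) : cmod (x * y) = cmod x * cmod y.
Proof.
case: x => a b; case: y => c d; rewrite /cmod /= -sqrtrM; last first.
  by rewrite addr_ge0 // sqr_ge0.
congr Num.sqrt; ring.
Qed.

Lemma cmod_real (r : R) : cmod (Complex r 0) = `|r|.
Proof. by rewrite /cmod /= expr0n /= addr0 sqrtr_sqr. Qed.

Lemma cmod0 : cmod (0 : R[i]) = 0.
Proof. by rewrite /cmod /= expr0n /= addr0 sqrtr0. Qed.

Lemma cmod_Re (z : R[i]) : `|complex.Re z| <= cmod z.
Proof.
case: z => a b; rewrite /cmod /= -sqrtr_sqr ler_wsqrtr //.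
by rewrite lerDl sqr_ge0.
Qed.

Lemma cmod_Im (z : R[i]) : `|complex.Im z| <= cmod z.
Proof.
case: z => a b; rewrite /cmod /= -sqrtr_sqr ler_wsqrtr //.
by rewrite lerDr sqr_ge0.
Qed.

Lemma cmod_CS (a b : R) (z : R[i]) : a ^+ 2 + b ^+ 2 = 1 ->
  a * complex.Re z + b * complex.Im z <= cmod z.
Proof.
case: z => c d /= h; rewrite /cmod /=.
apply: le_trans (ler_norm _) _.
rewrite -sqrtr_sqr ler_wsqrtr //.
have -> : c ^+ 2 + d ^+ 2 = (a ^+ 2 + b ^+ 2) * (c ^+ 2 + d ^+ 2) by rewrite h mul1r.
have e : (a ^+ 2 + b ^+ 2) * (c ^+ 2 + d ^+ 2) = (a * c + b * d) ^+ 2 + (a * d - b * c) ^+ 2 by ring.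
by rewrite e lerDl sqr_ge0.
Qed.

Lemma max_posneg (x : R) : Num.max x 0 - Num.max (- x) 0 = x.
Proof.
rewrite !maxEle; case: ifPn => h1; case: ifPn => h2; rewrite -?ltNge in h1 h2; lra.
Qed.


Section RS.
Variables (T : choiceType) (A : set T).
Local Notation E g := (\esum_(x in A) ((g x)%:E))%E.

Definition ok (g : T -> R) := (forall x, A x -> 0 <= g x) /\ (E g < +oo)%E.

Lemma ok_fin g : ok g -> E g \is a fin_num.
Proof. by case=> g0 gf; rewrite ge0_fin_numE // esum_ge0 // => x Ax; rewrite lee_fin g0. Qed.
Arguments ok_fin {g}.


Lemma ok_le g h : (forall x, A x -> 0 <= g x <= h x) -> ok h -> ok g.
Proof.
move=> gh [h0 hf]; split; first by move=> x /gh /andP[].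
apply: le_lt_trans hf; apply: le_esum => x /gh /andP[_]; by rewrite lee_fin.
Qed.
Arguments ok_le {g h}.


Lemma S_D g h : ok g -> ok h ->
  ok (fun x => g x + h x) /\ fine (E (fun x => g x + h x)) = fine (E g) + fine (E h).
Proof.
move=> og oh; have [g0 gf] := og; have [h0 hf] := oh.
have e : E (fun x => g x + h x) = (E g + E h)%E.
  rewrite -esumD; last by move=> x Ax; rewrite lee_fin h0.
    by apply: eq_esum => x _; rewrite EFinD.
  by move=> x Ax; rewrite lee_fin g0.
split; last by rewrite e fineD // ok_fin.
split; first by move=> x Ax; rewrite addr_ge0 // ?g0 ?h0.
by rewrite e lte_add_pinfty.
Qed.
Arguments S_D {g h}.


Lemma S_Z c g : 0 <= c -> ok g ->
  ok (fun x => c * g x) /\ fine (E (fun x => c * g x)) = c * fine (E g).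
Proof.
move=> c0 og; have [g0 gf] := og.
have e : E (fun x => c * g x) = (c%:E * E g)%E.
  by rewrite -esumZ //.
split; last by rewrite e fineM // ok_fin.
split; first by move=> x Ax; rewrite mulr_ge0 // g0.
by rewrite e -(fineK (ok_fin og)) -EFinM ltry.
Qed.
Arguments S_Z {c g}.


Lemma rsum_decomp f p n : ok p -> ok n -> (forall x, A x -> f x = p x - n x) ->
  rsum A f = fine (E p) - fine (E n).
Proof.
move=> op on fpn; have [p0 _] := op; have [n0 _] := on.
have ofp : ok (fun x => Num.max (f x) 0).
  apply: ok_le op => x Ax; rewrite le_max lexx orbT /= ge_max p0 // andbT fpn //.
  by rewrite lerBlDr lerDl n0.
have ofn : ok (fun x => Num.max (- f x) 0).
  apply: ok_le on => x Ax; rewrite le_max lexx orbT /= ge_max n0 // andbT fpn //.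
  by have := p0 x Ax; lra.
have e : fine (E (fun x => Num.max (f x) 0 + n x)) = fine (E (fun x => p x + Num.max (- f x) 0)).
  congr fine; apply: eq_esum => x Ax; congr EFin.
  have := max_posneg (f x); rewrite fpn //; lra.
rewrite (S_D ofp on).2 (S_D op ofn).2 in e.
rewrite /rsum; lra.
Qed.
Arguments rsum_decomp {f p n}.


Lemma rsum_lin g h (a b : R) :
  (E (fun x => `|g x|) < +oo)%E -> (E (fun x => `|h x|) < +oo)%E ->
  rsum A (fun x => a * g x + b * h x) = a * rsum A g + b * rsum A h.
Proof.
move=> gf hf.
have oga : ok (fun x => `|g x|) by split => // x _.
have oha : ok (fun x => `|h x|) by split => // x _.
have ogp : ok (fun x => Num.max (g x) 0).
  by apply: (ok_le _ oga) => x _; rewrite le_max lexx orbT /= ge_max ler_norm normr_ge0.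
have ogn : ok (fun x => Num.max (- g x) 0).
  by apply: (ok_le _ oga) => x _; rewrite le_max lexx orbT /= ge_max -normrN ler_norm normr_ge0.
have ohp : ok (fun x => Num.max (h x) 0).
  by apply: (ok_le _ oha) => x _; rewrite le_max lexx orbT /= ge_max ler_norm normr_ge0.
have ohn : ok (fun x => Num.max (- h x) 0).
  by apply: (ok_le _ oha) => x _; rewrite le_max lexx orbT /= ge_max -normrN ler_norm normr_ge0.
have ap0 : 0 <= Num.max a 0 by rewrite le_max lexx orbT.
have an0 : 0 <= Num.max (- a) 0 by rewrite le_max lexx orbT.
have bp0 : 0 <= Num.max b 0 by rewrite le_max lexx orbT.
have bn0 : 0 <= Num.max (- b) 0 by rewrite le_max lexx orbT.
have [q1 e1] := S_Z ap0 ogp.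
have [q2 e2] := S_Z an0 ogn.
have [q3 e3] := S_Z bp0 ohp.
have [q4 e4] := S_Z bn0 ohn.
have [q12 e12] := S_D q1 q2.
have [q34 e34] := S_D q3 q4.
have [qp ep] := S_D q12 q34.
have [q5 e5] := S_Z ap0 ogn.
have [q6 e6] := S_Z an0 ogp.
have [q7 e7] := S_Z bp0 ohn.
have [q8 e8] := S_Z bn0 ohp.
have [q56 e56] := S_D q5 q6.
have [q78 e78] := S_D q7 q8.
have [qn en] := S_D q56 q78.
rewrite (rsum_decomp qp qn); last first.
  move=> x _ /=; move: (max_posneg a) (max_posneg b) (max_posneg (g x)) (max_posneg (h x)).
  set ap := Num.max a 0; set an := Num.max (- a) 0.
  set bp := Num.max b 0; set bn := Num.max (- b) 0.
  set gp := Num.max (g x) 0; set gn := Num.max (- g x) 0.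
  set hp := Num.max (h x) 0; set hn := Num.max (- h x) 0.
  move=> <- <- <- <-; ring.
rewrite ep en e12 e34 e56 e78 e1 e2 e3 e4 e5 e6 e7 e8 /rsum.
move: (max_posneg a) (max_posneg b).
set ap := Num.max a 0; set an := Num.max (- a) 0.
set bp := Num.max b 0; set bn := Num.max (- b) 0.
move=> <- <-; ring.
Qed.

Lemma rsum_le_pos h : ok (fun x => Num.max (h x) 0) -> rsum A h <= fine (E (fun x => Num.max (h x) 0)).
Proof.
move=> _; rewrite /rsum lerBlDr lerDl fine_ge0 // esum_ge0 // => x _.
by rewrite lee_fin le_max lexx orbT.
Qed.

End RS.

Lemma csum_le (T : choiceType) (A : set T) (f : T -> R[i]) :
  ((cmod (csum A f))%:E <= \esum_(x in A) (cmod (f x))%:E)%E.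
Proof.
have [fin|inf] := ltP (\esum_(x in A) (cmod (f x))%:E)%E +oo%E; last first.
  exact: le_trans (leey _) inf.
have oc : ok T A (fun x => cmod (f x)) by split => // x _; exact: cmod_ge0.
rewrite /csum; set x := rsum A _; set y := rsum A _.
have -> : cmod (Complex x y) = Num.sqrt (x ^+ 2 + y ^+ 2) by [].
set r := Num.sqrt _.
have r0 : 0 <= r := sqrtr_ge0 _.
have r2 : r ^+ 2 = x ^+ 2 + y ^+ 2 by rewrite sqr_sqrtr // addr_ge0 // sqr_ge0.
have [rz|rp] := eqVneq r 0.
  by rewrite rz esum_ge0 // => t _; rewrite lee_fin cmod_ge0.
have rpos : 0 < r by rewrite lt_def rp r0.
pose a := x / r; pose b := y / r.
have ab1 : a ^+ 2 + b ^+ 2 = 1.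
  by rewrite /a /b !expr_div_n -mulrDl -r2 divff; last exact: expf_neq0.
have rab : r = a * x + b * y.
  rewrite /a /b (mulrAC x) (mulrAC y) -mulrDl -!expr2 -r2 expr2 mulrK; first by [].
  by rewrite unitfE.
have hRe : (\esum_(t in A) (`|complex.Re (f t)|)%:E < +oo)%E.
  apply: le_lt_trans fin; apply: le_esum => t _; rewrite lee_fin; exact: cmod_Re.
have hIm : (\esum_(t in A) (`|complex.Im (f t)|)%:E < +oo)%E.
  apply: le_lt_trans fin; apply: le_esum => t _; rewrite lee_fin; exact: cmod_Im.
have := @rsum_lin T A (fun t => complex.Re (f t)) (fun t => complex.Im (f t)) a b hRe hIm; rewrite -/x -/y -rab => <-.
set h := fun t => _.
have oh : ok T A (fun t => Num.max (h t) 0).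
  apply: (@ok_le T A _ _ _ oc) => t _; rewrite le_max lexx orbT /= ge_max cmod_ge0 andbT.
  exact: cmod_CS.
apply: le_trans (_ : (fine (\esum_(t in A) (Num.max (h t) 0)%:E))%:E <= _)%E.
  by rewrite lee_fin; apply: rsum_le_pos.
rewrite fineK ?ok_fin //; apply: le_esum => t _; rewrite lee_fin ge_max cmod_ge0 andbT.
exact: cmod_CS.
Qed.

End C.



Section P.
Variable R : realType.

Lemma lincoef_psum (alpha : nat -> nat -> nat -> R) (eta : R) m n k :
  1 <= eta -> \sum_(k0 < (m + n).+1) `|alpha m n k0| = 1 ->
  \sum_(0 <= i < k) `|lincoef alpha m n i| * eta ^+ i <= eta ^+ (m + n).
Proof.
move=> eta1 ha; set N := (m + n)%N.
have e0 : 0 <= eta by apply: le_trans eta1.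
apply: (@le_trans _ _ (\sum_(0 <= i < k) `|lincoef alpha m n i| * eta ^+ N)).
  apply: ler_sum => i _; rewrite /lincoef; case: ifPn => hi.
    by apply: ler_wpM2l => //; apply: ler_weXn2l.
  by rewrite normr0 !mul0r.
rewrite -mulr_suml ler_piMl ?exprn_ge0 //.
apply: (@le_trans _ _ (\sum_(0 <= i < k + N.+1) `|lincoef alpha m n i|)).
  rewrite [X in _ <= X](big_cat_nat _ (n:=k)) ?leq_addr //= lerDl.
  by apply: sumr_ge0 => i _.
rewrite [X in X <= _](big_cat_nat _ (n:=N.+1)) ?leq_addl //= [X in _ + X]big1_seq ?addr0.
  rewrite big_mkord -ha le_eqVlt; apply/orP; left; apply/eqP.
  by apply: eq_bigr => i _; rewrite /lincoef -/N ifT // -ltnS.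
move=> i /andP[_]; rewrite mem_index_iota => /andP[hi _].
by rewrite /lincoef -/N ifF ?normr0 //; apply/negbTE; rewrite -ltnNge.
Qed.

Lemma lincoef_bound (alpha : nat -> nat -> nat -> R) (eta : R) m n :
  1 <= eta -> \sum_(k0 < (m + n).+1) `|alpha m n k0| = 1 ->
  (\esum_(j in [set: nat]) (`|lincoef alpha m n j| * eta ^+ j)%:E <= (eta ^+ (m + n))%:E)%E.
Proof.
move=> eta1 ha.
have e0 : 0 <= eta by apply: le_trans eta1.
rewrite -nneseries_esumT; last by move=> j; rewrite lee_fin mulr_ge0 // exprn_ge0.
apply: lime_le.
  by apply: is_cvg_nneseries => j _ _; rewrite lee_fin mulr_ge0 // exprn_ge0.
apply: nearW => k /=; rewrite sumEFin lee_fin; exact: lincoef_psum.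
Qed.

Lemma rsum_single (T : choiceType) (x0 : T) (f : T -> R) :
  (forall y, y != x0 -> f y = 0) -> rsum [set: T] f = f x0.
Proof.
move=> fz; rewrite /rsum (@esum_single R _ x0); last by rewrite lee_fin le_max lexx orbT.
  rewrite (@esum_single R _ x0) /=; last by rewrite lee_fin le_max lexx orbT.
    exact: max_posneg.
  by move=> y /fz ->; rewrite oppr0 maxxx.
by move=> y /fz ->; rewrite maxxx.
Qed.

Lemma csum_single (T : choiceType) (x0 : T) (f : T -> R[i]) :
  (forall y, y != x0 -> f y = 0) -> csum [set: T] f = f x0.
Proof.
move=> fz; rewrite /csum (@rsum_single _ x0); last by move=> y /fz ->.
rewrite (@rsum_single _ x0); last by move=> y /fz ->.
by case: (f x0).
Qed.

End P.



Section Q.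
Variable R : realType.

Lemma conv_bound (alpha : nat -> nat -> nat -> R) (eta : R) (bb v : nat -> R[i]) (r : R) :
  1 <= eta -> (forall m n, \sum_(k < (m + n).+1) `|alpha m n k| = 1) ->
  l1eta_norm eta v = r%:E ->
  (l1eta_norm eta (gconv alpha bb v) <= l1eta_norm eta bb * r%:E)%E.
Proof.
move=> eta1 ha hv.
have e0 : 0 <= eta by apply: le_trans eta1.
have r0 : 0 <= r.
  by rewrite -lee_fin -hv /l1eta_norm esum_ge0 // => j _; rewrite lee_fin mulr_ge0 ?cmod_ge0 ?exprn_ge0.
rewrite /l1eta_norm.
pose F (j : nat) (p : nat * nat) := (eta ^+ j * (cmod (bb p.1) * cmod (v p.2) * `|lincoef alpha p.1 p.2 j|))%:E.
apply: (@le_trans _ _ (\esum_(j in [set: nat]) \esum_(p in [set: nat * nat]) F j p)%E).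
  apply: le_esum => j _; rewrite EFinM muleC /F.
  under eq_esum do rewrite EFinM.
  rewrite esumZ ?exprn_ge0 //; last first.
    by move=> p _; rewrite lee_fin !mulr_ge0 ?cmod_ge0.
  apply: lee_wpmul2l; first by rewrite lee_fin exprn_ge0.
  apply: le_trans (@csum_le R _ _ _) _; apply: le_esum => p _.
  by rewrite !cmodM cmod_real.
rewrite esum_swap; last by move=> j p; rewrite /F lee_fin !mulr_ge0 ?cmod_ge0 ?exprn_ge0.
apply: (@le_trans _ _ (\esum_(p in [set: nat * nat])
   ((cmod (bb p.1) * eta ^+ p.1) * (cmod (v p.2) * eta ^+ p.2))%:E)%E).
  apply: le_esum => p _.
  have -> : (\esum_(j in [set: nat]) F j p =
      (cmod (bb p.1) * cmod (v p.2))%:E *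
      \esum_(j in [set: nat]) (`|lincoef alpha p.1 p.2 j| * eta ^+ j)%:E)%E.
    rewrite -esumZ; last by move=> j _; rewrite lee_fin mulr_ge0 ?exprn_ge0.
      by apply: eq_esum => j _; rewrite /F -EFinM; congr EFin; ring.
    by rewrite mulr_ge0 ?cmod_ge0.
  apply: le_trans.
    apply: lee_wpmul2l; first by rewrite lee_fin mulr_ge0 ?cmod_ge0.
    exact: lincoef_bound.
  by rewrite -EFinM lee_fin exprD le_eqVlt; apply/orP; left; apply/eqP; ring.
rewrite (@esum_pair R nat nat (fun i j => ((cmod (bb i) * eta ^+ i) * (cmod (v j) * eta ^+ j))%:E)); last first.
  by move=> i j; rewrite lee_fin !mulr_ge0 ?cmod_ge0 ?exprn_ge0.
rewrite le_eqVlt; apply/orP; left; apply/eqP.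
rewrite muleC -esumZ //; last by move=> i _; rewrite lee_fin mulr_ge0 ?cmod_ge0 ?exprn_ge0.
apply: eq_esum => i _.
under eq_esum do rewrite EFinM.
rewrite esumZ ?mulr_ge0 ?cmod_ge0 ?exprn_ge0 //; last first.
  by move=> j _; rewrite lee_fin mulr_ge0 ?cmod_ge0 ?exprn_ge0.
by rewrite -[X in (_ * X)%E]/(l1eta_norm eta v) hv muleC.
Qed.

End Q.



Section L.
Variable R : realType.

Lemma lin_indep (phi : nat -> {poly R}) : (forall n, size (phi n) = n.+1) ->
  forall N (a : nat -> R), \sum_(k < N) a k *: phi k = 0 -> forall k, (k < N)%N -> a k = 0.
Proof.
move=> hs; elim=> [|N IH] a h k hk; first by [].
rewrite big_ord_recr /= in h.
have aN : a N = 0.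
  have := congr1 (fun p : {poly R} => p`_N) h; rewrite /= coefD coef_sum coefZ coef0.
  rewrite big1 ?add0r; last first.
    by move=> i _; rewrite coefZ nth_default ?mulr0 // hs.
  have : (phi N)`_N != 0.
    have hl : lead_coef (phi N) != 0 by rewrite lead_coef_eq0 -size_poly_eq0 hs.
    by move: hl; rewrite lead_coefE hs.
  by move=> hn /eqP; rewrite mulf_eq0 (negPf hn) orbF => /eqP.
rewrite aN scale0r addr0 in h.
have [->|kN] := eqVneq k N; first exact: aN.
apply: (IH a h); by rewrite ltn_neqAle kN -ltnS.
Qed.

Lemma alpha_m0 (phi : nat -> {poly R}) (alpha : nat -> nat -> nat -> R) :
  (forall n, size (phi n) = n.+1) ->
  (forall m n, phi m * phi n = \sum_(k < (m + n).+1) alpha m n k *: phi k) ->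
  forall m k, (k <= m)%N -> alpha m 0 k = if k == m then (phi 0)`_0 else 0.
Proof.
move=> hs hm m k hk.
set c := (phi 0)`_0.
have p0 : phi 0 = c%:P.
  have /size_poly1P [c' _ e] : size (phi 0) == 1%N by rewrite hs.
  by rewrite /c e coefC.
have e : \sum_(k < m.+1) (alpha m 0 k - (if (k : nat) == m then c else 0)) *: phi k = 0.
  under eq_bigr do rewrite scalerBl.
  rewrite sumrB; have := hm m 0; rewrite addn0 => <-; rewrite p0 mulrC mul_polyC.
  rewrite big_ord_recr /= eqxx big1 ?add0r ?subrr //.
  by move=> i _; rewrite ifF ?scale0r //; apply/negbTE; rewrite neq_ltn ltn_ord.
apply/eqP; rewrite -subr_eq0; apply/eqP.
exact: (@lin_indep phi hs m.+1 (fun k => alpha m 0 k - (if k == m then c else 0)) e k hk).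
Qed.


Lemma gconv_delta (phi : nat -> {poly R}) (alpha : nat -> nat -> nat -> R) :
  (forall n, size (phi n) = n.+1) ->
  (forall m n, phi m * phi n = \sum_(k < (m + n).+1) alpha m n k *: phi k) ->
  forall (bb : nat -> R[i]) (d : R[i]) j,
  gconv alpha bb (fun n => if n == 0%N then d else 0) j = bb j * d * Complex ((phi 0)`_0) 0.
Proof.
move=> hs hm bb d j; rewrite /gconv (@csum_single R _ (j, 0%N)) /=.
  rewrite /lincoef addn0 leqnn (@alpha_m0 phi alpha hs hm) // eqxx //.
move=> [m n] /=; have [->|nn] := eqVneq n 0%N; last by rewrite mulr0 mul0r.
move=> hne; rewrite /lincoef addn0; case: ifPn => hjm; last first.
  by have -> : Complex 0 0 = 0 :> R[i] by []; rewrite mulr0.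
rewrite (@alpha_m0 phi alpha hs hm) // ifF; last first.
  by apply/negbTE; apply: contra hne => /eqP ->.
by have -> : Complex 0 0 = 0 :> R[i] by []; rewrite mulr0.
Qed.

Lemma gconv_zero (alpha : nat -> nat -> nat -> R) (bb : nat -> R[i]) j :
  gconv alpha bb (fun _ => 0) j = 0.
Proof.
rewrite /gconv (@csum_single R _ (0%N, 0%N)) /= ?mulr0 ?mul0r //.
by move=> y _; rewrite mulr0 mul0r.
Qed.

End L.



Lemma N_ge0 (R : realType) (eta : R) (v : nat -> R[i]) : 0 <= eta ->
  (0 <= l1eta_norm eta v)%E.
Proof.
move=> e0; rewrite /l1eta_norm esum_ge0 // => n _.
by rewrite lee_fin mulr_ge0 ?cmod_ge0 ?exprn_ge0.
Qed.

Lemma upper (R : realType) (nu eta : R) (alpha : nat -> nat -> nat -> R)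
  (b : int -> int -> nat -> R[i]) (u : int -> nat -> R[i]) (Bu : int -> nat -> R[i]) (m : R) :
  1 <= nu -> 1 <= eta ->
  (forall m n, \sum_(k < (m + n).+1) `|alpha m n k| = 1) ->
  (l1nu_norm nu eta u <= 1)%E ->
  (forall k j, Bu k j = csum [set: int] (fun l => gconv alpha (b k l) (u l) j)) ->
  (forall l, (((nu ^+ `|l|%N)^-1)%:E *
    (\esum_(k in [set: int]) (l1eta_norm eta (b k l) * (nu ^+ `|k|%N)%:E)) <= m%:E)%E) ->
  0 <= m ->
  (l1nu_norm nu eta Bu <= m%:E)%E.
Proof.
move=> nu1 eta1 ha hu hrep hM m0.
have n0 : 0 <= nu by apply: le_trans nu1.
have e0 : 0 <= eta by apply: le_trans eta1.
have npos l : 0 < nu ^+ l by apply: exprn_gt0; apply: lt_le_trans nu1.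
have Nge0 v : (0 <= l1eta_norm eta v)%E := @N_ge0 R eta v e0.
have ufin l : l1eta_norm eta (u l) \is a fin_num.
  rewrite ge0_fin_numE //.
  have : (l1eta_norm eta (u l) * (nu ^+ `|l|%N)%:E <= 1)%E.
    apply: le_trans hu; rewrite /l1nu_norm.
    apply: (@esum_ge_single R _ l (fun k => l1eta_norm eta (u k) * (nu ^+ `|k|%N)%:E)%E).
    by move=> y; rewrite mule_ge0 // lee_fin exprn_ge0.
  case: (l1eta_norm eta (u l)) => [r _|h|//]; first exact: ltry.
  by move: h; rewrite gt0_mulye ?lte_fin ?npos.
pose U l := fine (l1eta_norm eta (u l)).
have hU l : l1eta_norm eta (u l) = (U l)%:E by rewrite /U fineK.
have U0 l : 0 <= U l by rewrite -lee_fin -hU.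
have stepk k : (l1eta_norm eta (Bu k) <=
    \esum_(l in [set: int]) (l1eta_norm eta (b k l) * (U l)%:E))%E.
  apply: (@le_trans _ _ (\esum_(l in [set: int]) l1eta_norm eta (gconv alpha (b k l) (u l)))%E); last first.
    by apply: le_esum => l _; apply: conv_bound.
  rewrite /l1eta_norm esum_swap; last first.
    by move=> l j; rewrite lee_fin mulr_ge0 ?cmod_ge0 ?exprn_ge0.
  apply: le_esum => j _; rewrite hrep EFinM.
  under eq_esum do rewrite EFinM muleC.
  rewrite esumZ ?exprn_ge0 //; last by move=> l _; rewrite lee_fin cmod_ge0.
  rewrite muleC; apply: lee_wpmul2l; first by rewrite lee_fin exprn_ge0.
  exact: csum_le.
rewrite /l1nu_norm.
apply: (@le_trans _ _ (\esum_(k in [set: int])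
   ((\esum_(l in [set: int]) (l1eta_norm eta (b k l) * (U l)%:E)) * (nu ^+ `|k|%N)%:E))%E).
  apply: le_esum => k _; apply: lee_wpmul2r; first by rewrite lee_fin exprn_ge0.
  exact: stepk.
have -> : (\esum_(k in [set: int])
   ((\esum_(l in [set: int]) (l1eta_norm eta (b k l) * (U l)%:E)) * (nu ^+ `|k|%N)%:E) =
   \esum_(l in [set: int]) (U l)%:E *
     \esum_(k in [set: int]) (l1eta_norm eta (b k l) * (nu ^+ `|k|%N)%:E))%E.
  transitivity (\esum_(k in [set: int]) \esum_(l in [set: int])
     ((U l)%:E * (l1eta_norm eta (b k l) * (nu ^+ `|k|%N)%:E)))%E.
    apply: eq_esum => k _; rewrite muleC -esumZ ?exprn_ge0 //; last first.
      by move=> l _; rewrite mule_ge0 ?lee_fin ?U0.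
    by apply: eq_esum => l _; rewrite muleA [X in (X * _)%E]muleC -muleA [X in (_ * X)%E]muleC muleCA.
  rewrite esum_swap; last by move=> k l; rewrite !mule_ge0 ?lee_fin ?exprn_ge0.
  apply: eq_esum => l _; rewrite esumZ //.
  by move=> k _; rewrite mule_ge0 ?lee_fin ?exprn_ge0.
apply: (@le_trans _ _ (\esum_(l in [set: int]) (m%:E * (l1eta_norm eta (u l) * (nu ^+ `|l|%N)%:E)))%E).
  apply: le_esum => l _.
  rewrite hU muleA [X in (_ <= X * _)%E]muleC -muleA; apply: lee_wpmul2l; first by rewrite lee_fin.
  have := hM l; set S := esum _ _ => hS.
  have -> : S = ((nu ^+ `|l|%N)%:E * (((nu ^+ `|l|%N)^-1)%:E * S))%E.
    by rewrite muleA -EFinM mulfV ?mul1e // gt_eqF.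
  apply: le_trans (lee_wpmul2l _ hS) _; first by rewrite lee_fin exprn_ge0.
  by rewrite muleC.
rewrite esumZ //; last by move=> l _; rewrite mule_ge0 ?lee_fin ?exprn_ge0.
rewrite -[X in (_ <= X)%E]mule1; apply: lee_wpmul2l; first by rewrite lee_fin.
exact: hu.
Qed.



Theorem lemma3p3 (R : realType) (nu eta : R)
  (phi : nat -> {poly R}) (alpha : nat -> nat -> nat -> R)
  (b : int -> int -> nat -> R[i])
  (B : (int -> nat -> R[i]) -> (int -> nat -> R[i])) :
  1 <= nu -> 1 <= eta ->
  (forall n, size (phi n) = n.+1) ->
  (forall m n, phi m * phi n = \sum_(k < (m + n).+1) alpha m n k *: phi k) ->
  (forall m n, \sum_(k < (m + n).+1) `|alpha m n k| = 1) ->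
  (forall k l, (l1eta_norm eta (b k l) < +oo)%E) ->
  (* B is a linear operator on ell^1_nu(Z, ell^1_eta(N, C)) *)
  (forall u, (l1nu_norm nu eta u < +oo)%E -> (l1nu_norm nu eta (B u) < +oo)%E) ->
  (forall (a : R[i]) u v, (l1nu_norm nu eta u < +oo)%E ->
     (l1nu_norm nu eta v < +oo)%E ->
     B (fun k j => a * u k j + v k j) = (fun k j => a * B u k j + B v k j)) ->
  (* matrix representation (B u)_k = sum_l b_{k,l} * u_l (unconditional sums) *)
  (forall u, (l1nu_norm nu eta u < +oo)%E -> forall k j,
     csummable [set: int] (fun l => gconv alpha (b k l) (u l) j) /\
     B u k j = csum [set: int] (fun l => gconv alpha (b k l) (u l) j)) ->
  opnorm nu eta B =
  ereal_sup (range (fun l : int =>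
    ((nu ^+ `|l|%N)^-1)%:E *
    \esum_(k in [set: int]) (l1eta_norm eta (b k l) * (nu ^+ `|k|%N)%:E))%E).
Proof.
move=> nu1 eta1 hs hm ha hb hBfin hBlin hrep.
set M := ereal_sup _.
have n0 : 0 <= nu by apply: le_trans nu1.
have e0 : 0 <= eta by apply: le_trans eta1.
have npos l : 0 < nu ^+ l by apply: exprn_gt0; apply: lt_le_trans nu1.
have elt_ge0 l : (0 <= ((nu ^+ `|l|%N)^-1)%:E *
    \esum_(k in [set: int]) (l1eta_norm eta (b k l) * (nu ^+ `|k|%N)%:E))%E.
  rewrite mule_ge0 // ?lee_fin ?invr_ge0 ?exprn_ge0 // esum_ge0 // => k _.
  by rewrite mule_ge0 ?lee_fin ?exprn_ge0 // N_ge0.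
have hM l : (((nu ^+ `|l|%N)^-1)%:E *
    (\esum_(k in [set: int]) (l1eta_norm eta (b k l) * (nu ^+ `|k|%N)%:E)) <= M)%E.
  by apply: ereal_sup_ubound; exists l.
apply/le_anti/andP; split.
  rewrite /opnorm; apply: ge_ereal_sup => _ [u hu <-].
  have M0 : (0 <= M)%E := le_trans (elt_ge0 0) (hM 0).
  have [Minf|Mlt] := eqVneq M +oo%E; first by rewrite Minf leey.
  have Mfin : M \is a fin_num by rewrite ge0_fin_numE // lt_neqAle Mlt leey.
  have ufin : (l1nu_norm nu eta u < +oo)%E by apply: le_lt_trans hu (ltry 1).
  rewrite -(fineK Mfin); apply: (@upper R nu eta alpha b u (B u) (fine M)) => //.
  - by move=> k j; exact: (hrep u ufin k j).2.
  - by move=> l; rewrite fineK //; exact: hM.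
  - exact: fine_ge0.
apply: ge_ereal_sup => _ [l _ <-].
set c := (phi 0)`_0.
have hc : `|c| = 1.
  have := ha 0%N 0%N; rewrite big_ord1 /= (@alpha_m0 R phi alpha hs hm 0%N 0%N) //.
set c' := (nu ^+ `|l|%N)^-1.
have c'pos : 0 < c' by rewrite invr_gt0 npos.
pose u : int -> nat -> R[i] := fun k n => if k == l then (if n == 0%N then Complex c' 0 else 0) else 0.
have Nul : l1eta_norm eta (u l) = c'%:E.
  rewrite /l1eta_norm (@esum_single R _ 0%N); last by rewrite lee_fin mulr_ge0 ?cmod_ge0 ?exprn_ge0.
    by rewrite /u !eqxx cmod_real expr0 mulr1 gtr0_norm.
  by move=> y hy; rewrite /u eqxx (negbTE hy) cmod0 mul0r.
have hu1 : l1nu_norm nu eta u = 1%E.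
  rewrite /l1nu_norm (@esum_single R _ l).
    by rewrite Nul -EFinM mulVf // gt_eqF.
  - move=> y hy; rewrite /l1eta_norm esum1 ?mul0e // => n _.
    by rewrite /u (negbTE hy) cmod0 mul0r.
  - by rewrite mule_ge0 ?lee_fin ?exprn_ge0 // N_ge0.
have ufin : (l1nu_norm nu eta u < +oo)%E by rewrite hu1 ltry.
have hBu k j : B u k j = b k l j * Complex c' 0 * Complex c 0.
  rewrite (hrep u ufin k j).2 (@csum_single R _ l).
    by rewrite /u eqxx; exact: (@gconv_delta R phi alpha hs hm).
  by move=> y hy; rewrite /u (negbTE hy); exact: gconv_zero.
have hN k : l1eta_norm eta (B u k) = (c'%:E * l1eta_norm eta (b k l))%E.
  rewrite /l1eta_norm -esumZ ?(ltW c'pos) //; last first.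
    by move=> j _; rewrite lee_fin mulr_ge0 ?cmod_ge0 ?exprn_ge0.
  apply: eq_esum => j _; rewrite -EFinM hBu !cmodM !cmod_real hc (gtr0_norm c'pos).
  by congr EFin; ring.
have -> : (((nu ^+ `|l|%N)^-1)%:E *
    \esum_(k in [set: int]) (l1eta_norm eta (b k l) * (nu ^+ `|k|%N)%:E))%E = l1nu_norm nu eta (B u).
  rewrite /l1nu_norm [RHS](eq_esum (b := fun k => (c'%:E * (l1eta_norm eta (b k l) * (nu ^+ `|k|%N)%:E))%E)).
    rewrite esumZ ?(ltW c'pos) //.
    by move=> k _; rewrite mule_ge0 ?lee_fin ?exprn_ge0 // N_ge0.
  by move=> k _; rewrite hN muleA.
by apply: ereal_sup_ubound; exists u => //=; rewrite hu1.
Qed.
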